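(* Let $K\ge 1$ and $N\ge 1$ be integers, let $0\le \tau_1<\tau_2<\dots<\tau_K\le 1$, and let $\{w(\tau)\}_{\tau\in[0,1]}\subset\mathbb{R}^p$ be a fixed (non-random) weight trajectory. For each $k$, let $p_{\tau_k}$ be a probability distribution on $X\times Y$ and let $\hat p_{\tau_k}$ be a sample of $N$ pairs $(x,y)$ drawn i.i.d. from $p_{\tau_k}$, the samples for different $k$ being independent. Let $\ell(w;x,y)$ be a loss taking values in $[0,M]$ for some $M>0$. For $r\ge 0$ and each $k$ define the Rademacher complexity $$\mathcal{R}^{(k)}_N(r)=\mathbb{E}_{\hat p\sim p_{\tau_k}^N}\,\mathbb{E}_\sigma\Big[\sup_{w:\ \|w\|_{\mathrm{FR}}\le r}\frac1N\sum_{i=1}^N\sigma^i\,\ell(w;x^i,y^i)\Big],$$ where $\sigma^1,\dots,\sigma^N$ are i.i.d. uniform on $\{-1,1\}$ and $\hat p=\{(x^i,y^i)\}_{i=1}^N$. Set $R=\frac{2}{K}\sum_{k=1}^K\mathcal{R}^{(k)}_N(\|w(\tau_k)\|_{\mathrm{FR}})$. Then for every $\epsilon>R$, $$\Pr\Big\{\frac1K\sum_{k=1}^K\Big(\mathbb{E}_{(x,y)\sim p_{\tau_k}}[\ell(w(\tau_k);x,y)]-\frac1N\sum_{(x,y)\in\hat p_{\tau_k}}\ell(w(\tau_k);x,y)\Big)>\epsilon\Big\}\le \exp\Big\{-\frac{2K}{M^2}\big(\epsilon-R\big)^2\Big\}.$$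
   Context: $\|\cdot\|_{\mathrm{FR}}$ denotes the Fisher-Rao norm of a weight vector, $\|w\|_{\mathrm{FR}}^2=\langle w, g(w)\,w\rangle$, where $g(w)$ is the Fisher Information Matrix of the model $p_w(y\mid x)$: $g_{ij}(w)=\mathbb{E}_{x\sim p(x),\,y\sim p_w(y|x)}[\partial_{w_i}\log p_w(y|x)\,\partial_{w_j}\log p_w(y|x)]$. The supremum in the Rademacher complexity is over all weights in the Fisher-Rao-norm ball of the given radius (assumed measurable). *)

(* Defs.v *)
From HB Require Import structures.
From mathcomp Require Import all_boot all_order all_algebra.
From mathcomp Require Import all_classical all_reals all_analysis.
Set Implicit Arguments. Unset Strict Implicit. Unset Printing Implicit Defensive.
Import Order.TTheory GRing.Theory Num.Theory.
Import numFieldNormedType.Exports.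
Local Open Scope classical_set_scope.
Local Open Scope ring_scope.

Section FR.
Context {R : realType} {dX dY : measure_display}
  {X : measurableType dX} {Y : measurableType dY} {p : nat}.

Definition partialw (f : 'rV[R]_p -> R) (i : 'I_p) (w : 'rV[R]_p) : R :=
  'D_(delta_mx 0 i) f w.

(* Fisher information matrix of the model p_w(y|x) = dens w x y (a density
   with respect to the reference measure nu on Y), inputs x ~ px:
   g_ij(w) = E_{x~px, y~p_w(.|x)} [d_i log p_w(y|x) d_j log p_w(y|x)]. *)
Definition fisher (px : probability X R) (nu : {measure set Y -> \bar R})
  (dens : 'rV[R]_p -> X -> Y -> R) (w : 'rV[R]_p) (i j : 'I_p) : R :=
  Rintegral px setT (fun x =>
    Rintegral nu setT (fun y =>
      dens w x y *
      (partialw (fun v => ln (dens v x y)) i w *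
       partialw (fun v => ln (dens v x y)) j w))).

Definition FRnorm px nu dens (w : 'rV[R]_p) : R :=
  Num.sqrt (\sum_(i < p) \sum_(j < p) w 0 i * fisher px nu dens w i j * w 0 j).

Definition rad_inner (N : nat) (normw : 'rV[R]_p -> R)
  (loss : 'rV[R]_p -> X -> Y -> R) (r : R) (s : 'I_N -> (X * Y)%type) : R :=
  (2 ^+ N)^-1 * \sum_(sg : {ffun 'I_N -> bool})
     sup [set (N%:R^-1 * \sum_(i < N) (-1) ^+ sg i * loss w (s i).1 (s i).2)
         | w in [set w | normw w <= r]].

(* Rademacher complexity R_N(r) = E_{phat ~ dist^N} E_sigma [sup ...], where
   the sample phat is realised as a random vector S on a probability space
   (Omega, P) whose law is dist^N. *)
Definition rademacher {d} {Omega : measurableType d} (P : probability Omega R)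
  (N : nat) (S : Omega -> 'I_N -> (X * Y)%type) (normw : 'rV[R]_p -> R)
  (loss : 'rV[R]_p -> X -> Y -> R) (r : R) : R :=
  Rintegral P setT (fun om => rad_inner normw loss r (S om)).

End FR.

(* Main.v *)
Require Import Defs.
From HB Require Import structures.
From mathcomp Require Import all_boot all_order all_algebra.
From mathcomp Require Import all_classical all_reals all_analysis.
From mathcomp Require Import ring lra measurable_realfun.
Import Order.TTheory GRing.Theory Num.Theory.
Import numFieldNormedType.Exports.
Local Open Scope classical_set_scope.
Local Open Scope ring_scope.
Section S. Variable R : realType.

Lemma is_derive1_comp_ (f g : R -> R) (x df dg : R) :
  is_derive x 1 f df -> is_derive (f x) 1 g dg -> is_derive x 1 (g \o f) (dg * df).
Proof.
move=> [fd fv] [gd gv]; apply: DeriveDef.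
  apply/derivable1_diffP; apply: differentiable_comp; exact/derivable1_diffP.
have := derive1_comp fd gd; rewrite !derive1E => ->.
by rewrite gv fv.
Qed.

Lemma tanh_aux (y : R) : 0 <= y -> expR y * (2 - y) <= 2 + y.
Proof.
move=> y0.
pose phi := fun y : R => 2 + y - expR y * (2 - y).
have D (x : R) : is_derive x 1 phi (1 - expR x * (1 - x)).
  apply: is_derive_eq; rewrite /GRing.scale /=; lra.
have Dc : {within `[0, y], continuous phi}.
  apply: derivable_within_continuous => x _; exact: (@ex_derive _ _ _ _ _ _ _ (D x)).
have [c _ H] := MVT_segment y0 (fun x _ => D x) Dc.
have : 0 <= phi y - phi 0.
  rewrite H mulr_ge0 ?subr0 // subr_ge0.
  have h1 := expR_ge1Dx (- c).
  have h2 : expR c * expR (- c) = 1 by rewrite -expRD subrr expR0.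
  have h3 := expR_gt0 c.
  nra.
rewrite /phi expR0; lra.
Qed.

Lemma Dpos (q u : R) : 0 <= q <= 1 -> 0 < u -> 0 < 1 - q + q * u.
Proof.
move=> /andP[q0 q1] u0; have [u1|u1] := leP u 1; nra.
Qed.

Lemma expRN_derive (x : R) : is_derive x 1 (fun x => expR (- x)) (- expR (- x)).
Proof.
have := @is_derive1_comp_ -%R expR x (-1) (expR (- x)) _ _.
by rewrite mulrN1; apply.
Qed.

Lemma hoeff_aux (q h : R) : 0 <= q <= 1 -> 0 <= h ->
  1 - q + q * expR (- h) <= expR (h ^+ 2 / 8 - q * h).
Proof.
move=> q01 h0.
pose D := fun x : R => 1 - q + q * expR (- x).
have Dp (x : R) : 0 < D x by apply: Dpos => //; exact: expR_gt0.
have DD (x : R) : is_derive x 1 D (- (q * expR (- x))).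
  have := expRN_derive x => ?.
  by apply: is_derive_eq; rewrite /GRing.scale /=; ring.
have LD (x : R) : is_derive x 1 (@ln R \o D) ((D x)^-1 * - (q * expR (- x))).
  apply: is_derive1_comp_ => //; exact: is_derive1_ln.
pose g := fun x : R => ln (D x) + q * x - x ^+ 2 / 8.
pose dg := fun x : R => (D x)^-1 * - (q * expR (- x)) + q - x / 4.
have Dg (x : R) : is_derive x 1 g (dg x).
  have := LD x => ?.
  apply: is_derive_eq; rewrite /dg /GRing.scale /=.
  have D0 : D x != 0 by rewrite gt_eqF.
  by field.
have Dc : {within `[0, h], continuous g}.
  apply: derivable_within_continuous => x _; exact: (@ex_derive _ _ _ _ _ _ _ (Dg x)).
have [c cin H] := MVT_segment h0 (fun x _ => Dg x) Dc.
have /andP[c0 ch] : 0 <= c <= h by rewrite in_itv in cin.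
have dgc : dg c <= 0.
  have th := @tanh_aux (c / 2) (divr_ge0 c0 (ler0n _ 2)).
  set E := expR (c / 2) in th.
  have E1 : 1 <= E by rewrite -expR0 ler_expR divr_ge0.
  have Eu : expR (- c) * (E * E) = 1.
    rewrite /E -!expRD.
    have -> : - c + (c / 2 + c / 2) = 0 by field.
    by rewrite expR0.
  have Dc0 := Dp c; rewrite /dg /D in Dc0 *.
  set u := expR (- c) in Eu Dc0 *.
  have u0 : 0 < u by exact: expR_gt0.
  move: q01 => /andP[q0 q1].
  have key : q * (1 - q) * (1 - u) <= c / 4 * (1 - q + q * u).
    have k1 : q * (1 - q) * (E * E - 1) <= c / 4 * ((1 - q) * (E * E) + q).
      have a1 : E - 1 <= c / 4 * (E + 1) by lra.
      have a2 : 0 <= q * (1 - q) * (E + 1) by rewrite !mulr_ge0 ?subr_ge0 //; lra.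
      have a3 : q * (1 - q) * (E + 1) * (E - 1) <= q * (1 - q) * (E + 1) * (c / 4 * (E + 1)).
        by rewrite ler_wpM2l.
      have a4 : 0 <= ((1 - q) * E - q) ^+ 2 by rewrite sqr_ge0.
      have a5 : 0 <= c / 4 by rewrite divr_ge0.
      have a6 : q * (1 - q) * (E + 1) ^+ 2 <= (1 - q) * (E * E) + q by nra.
      nra.
    have EE : 0 < E * E by nra.
    have : (q * (1 - q) * (1 - u)) * (E * E) <= (c / 4 * (1 - q + q * u)) * (E * E).
      have -> : (q * (1 - q) * (1 - u)) * (E * E) = q * (1 - q) * (E * E - u * (E * E)) by ring.
      have -> : (c / 4 * (1 - q + q * u)) * (E * E) = c / 4 * ((1 - q) * (E * E) + q * (u * (E * E))) by ring.
      by rewrite Eu mulr1.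
    by rewrite ler_pM2r.
  have Dinv : (1 - q + q * u)^-1 * (1 - q + q * u) = 1 by rewrite mulVf // gt_eqF.
  set Di := (1 - q + q * u)^-1 in Dinv *.
  have Di0 : 0 < Di by rewrite invr_gt0.
  have : Di * (q * (1 - q) * (1 - u)) <= Di * (c / 4 * (1 - q + q * u)) by rewrite ler_wpM2l // ltW.
  nra.
have : g h <= 0.
  have g0 : g 0 = 0 by rewrite /g /D oppr0 expR0 mulr1 subrK ln1; lra.
  have : g h - g 0 <= 0 by rewrite H mulr_le0_ge0 // subr0.
  by rewrite g0 subr0.
rewrite /g => gh.
have -> : 1 - q + q * expR (- h) = expR (ln (D h)) by rewrite lnK // posrE.
by rewrite ler_expR; lra.
Qed.

Lemma expR_chord (c M v : R) : 0 < M -> 0 <= v <= M ->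
  expR (- (c * v)) <= 1 - v / M + v / M * expR (- (c * M)).
Proof.
move=> M0 /andP[v0 vM].
set x := - (c * v).
have ex := expR_gt0 x.
have h1 := expR_ge1Dx (- x).
have h2 := expR_ge1Dx (- (c * M) - x).
have e1 : expR x * expR (- x) = 1 by rewrite -expRD subrr expR0.
have e2 : expR x * expR (- (c * M) - x) = expR (- (c * M)) by rewrite -expRD addrC subrK.
have h1' : expR x * (1 - x) <= 1.
  by rewrite -[X in _ <= X]e1; apply: ler_wpM2l; [exact/ltW | lra].
have h2' : expR x * (1 + (- (c * M) - x)) <= expR (- (c * M)) by rewrite -e2; apply: ler_wpM2l; [exact/ltW | lra].
set t := v / M.
have t0 : 0 <= t by rewrite divr_ge0 // ltW.
have t1 : t <= 1 by rewrite ler_pdivrMr // mul1r.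
have xt : x = t * (- (c * M)) by rewrite /x /t; field; rewrite gt_eqF.
have : expR x = (1 - t) * (expR x * (1 - x)) + t * (expR x * (1 + (- (c * M) - x))).
  rewrite xt; ring.
move=> ->.
have a1 : (1 - t) * (expR x * (1 - x)) <= (1 - t) * 1 by rewrite ler_wpM2l // subr_ge0.
have a2 : t * (expR x * (1 + (- (c * M) - x))) <= t * expR (- (c * M)) by rewrite ler_wpM2l.
lra.
Qed.

Lemma hoeff_fin (I : finType) (p v : I -> R) (M c : R) : 0 < M -> 0 <= c ->
  (forall i, 0 <= p i) -> \sum_i p i = 1 -> (forall i, 0 <= v i <= M) ->
  \sum_i p i * expR (c * (\sum_j p j * v j - v i)) <= expR (c ^+ 2 * M ^+ 2 / 8).
Proof.
move=> M0 c0 p0 p1 vM.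
set nu := \sum_j p j * v j.
have nu0 : 0 <= nu by apply: sumr_ge0 => i _; apply: mulr_ge0 => //; case/andP: (vM i).
have nuM : nu <= M.
  rewrite /nu -[X in _ <= X]mul1r -p1 mulr_suml; apply: ler_sum => i _.
  by apply: ler_wpM2l => //; case/andP: (vM i).
set q := nu / M; set h := c * M.
have q01 : 0 <= q <= 1 by apply/andP; split; [rewrite divr_ge0 // ltW | rewrite ler_pdivrMr // mul1r].
have h0 : 0 <= h by rewrite mulr_ge0 // ltW.
have S1 : \sum_i p i * expR (c * (nu - v i)) = expR (c * nu) * \sum_i p i * expR (- (c * v i)).
  rewrite mulr_sumr; apply: eq_bigr => i _; rewrite mulrCA -expRD; congr (_ * expR _); ring.
have S2 : \sum_i p i * expR (- (c * v i)) <= 1 - q + q * expR (- h).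
  apply: (@le_trans _ _ (\sum_i p i * (1 - v i / M + v i / M * expR (- h)))).
    by apply: ler_sum => i _; apply: ler_wpM2l => //; apply: expR_chord.
  have -> : \sum_i p i * (1 - v i / M + v i / M * expR (- h)) =
      \sum_i p i - (\sum_i p i * v i) / M + (\sum_i p i * v i) / M * expR (- h).
    rewrite !mulr_suml -sumrB -big_split /=; apply: eq_bigr => i _; ring.
  by rewrite p1.
rewrite S1.
have cnu : c * nu = q * h by rewrite /q /h; field; rewrite gt_eqF.
apply: (@le_trans _ _ (expR (c * nu) * (1 - q + q * expR (- h)))).
  by rewrite ler_wpM2l // ltW // expR_gt0.
rewrite cnu mulrC; apply: (@le_trans _ _ (expR (h ^+ 2 / 8 - q * h) * expR (q * h))).
  apply: ler_wpM2r; first exact/ltW/expR_gt0.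
  exact: hoeff_aux.
by rewrite -expRD subrK ler_expR /h exprMn.
Qed.
End S.
Section Bins.
Context {R : realType} {dT : measure_display} {T : measurableType dT} (Q : probability T R).
Variables (l : T -> R) (M : R) (n : nat).
Hypotheses (M0 : 0 < M) (n0 : (0 < n)%N) (ml : measurable_fun setT l)
  (lM : forall z, 0 <= l z <= M).

Definition vb (m : 'I_n.+1) : R := m%:R * (M / n%:R).
Definition bin (m : 'I_n.+1) := [set z | vb m <= l z < vb m + M / n%:R].

Let w0 : 0 < M / n%:R.
Proof. by rewrite divr_gt0 // ltr0n. Qed.

Lemma vbS m : vb m + M / n%:R = (m.+1)%:R * (M / n%:R).
Proof. by rewrite /vb -natr1 mulrDl mul1r. Qed.

Lemma bin_meas m : measurable (bin m).
Proof.
have -> : bin m = setT `&` l @^-1` [set` `[vb m, vb m + M / n%:R[%R].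
  by apply/seteqP; split => z /=; rewrite /bin /= in_itv /=; [move=> H; split | move=> [_ H]].
exact: ml (measurable_itv _).
Qed.

Lemma vb_range m : 0 <= vb m <= M.
Proof.
apply/andP; split; first by rewrite /vb mulr_ge0 // ltW.
have nE : n%:R * (M / n%:R) = M :> R by field; rewrite pnatr_eq0 -lt0n.
rewrite /vb -[X in _ <= X]nE; apply: ler_wpM2r; first exact: ltW.
rewrite ler_nat.
by have := ltn_ord m; rewrite ltnS.
Qed.

Lemma bin_cover z : exists m, bin m z.
Proof.
set y := l z * n%:R / M.
have y0 : 0 <= y.
  rewrite /y; apply: divr_ge0; last exact: ltW.
  by apply: mulr_ge0 => //; case/andP: (lM z).
have ty : (Num.truncn y < n.+1)%N.
  rewrite ltnS truncn_le_nat /y ltr_pdivrMr // -natr1 mulrDl mul1r.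
  apply: (le_lt_trans (y := M * n%:R)); last by rewrite mulrC ltrDl.
  by rewrite ler_pM2r ?ltr0n //; case/andP: (lM z).
exists (Ordinal ty); rewrite /bin /= vbS /vb /=.
have /andP[t1 t2] := truncn_itv y0.
have Mn : M != 0 by rewrite gt_eqF.
have nn : n%:R != 0 :> R by rewrite pnatr_eq0 -lt0n.
have lE : l z = y * (M / n%:R) by rewrite /y; field; rewrite nn Mn.
by rewrite lE ler_pM2r // ltr_pM2r // t1 t2.
Qed.

Lemma bin_uniq m m' z : bin m z -> bin m' z -> m = m'.
Proof.
rewrite /bin /= !vbS /vb => /andP[a1 a2] /andP[b1 b2].
have h1 : m%:R < (m'.+1)%:R :> R by rewrite -(ltr_pM2r w0); exact: le_lt_trans a1 b2.
have h2 : m'%:R < (m.+1)%:R :> R by rewrite -(ltr_pM2r w0); exact: le_lt_trans b1 a2.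
rewrite ltr_nat ltnS in h1; rewrite ltr_nat ltnS in h2.
by apply: val_inj => /=; apply/eqP; rewrite eqn_leq h1 h2.
Qed.

Lemma bin_triv : trivIset setT bin.
Proof. by move=> i j _ _ [z [bi bj]]; exact: bin_uniq bi bj. Qed.

Lemma bin_bigU : \big[setU/set0]_(m < n.+1) bin m = setT.
Proof.
apply/seteqP; split => // z _; have [m bm] := bin_cover z.
rewrite -bigcup_seq; exists m => //=; exact: mem_index_enum.
Qed.

Lemma bin_sum1 : \sum_m fine (Q (bin m)) = 1.
Proof.
have : (\sum_(m < n.+1) Q (bin m) = 1)%E.
  rewrite -measure_bigsetU_ord ?bin_bigU.
  - exact: probability_setT.
  - exact: bin_meas.
  - exact: bin_triv.
move=> H; apply: EFin_inj; rewrite -sumEFin -H; apply: eq_bigr => m _.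
rewrite fineK // ge0_fin_numE ?measure_ge0 //.
by apply: (le_lt_trans (probability_le1 Q (bin_meas m))); rewrite ltry.
Qed.

Lemma bin_int : Rintegral Q setT l <= \sum_m fine (Q (bin m)) * vb m + M / n%:R.
Proof.
have pE m : Q (bin m) = (fine (Q (bin m)))%:E.
  rewrite fineK // ge0_fin_numE ?measure_ge0 //.
  by apply: (le_lt_trans (probability_le1 Q (bin_meas m))); rewrite ltry.
have mlE := proj2 (measurable_EFinP setT l) ml.
have I1 : (\int[Q]_(z in setT) (l z)%:E =
    \sum_(m <- index_enum 'I_n.+1) \int[Q]_(z in bin m) (l z)%:E)%E.
  rewrite -[in LHS]bin_bigU; apply: ge0_integral_bigsetU.
  - exact: bin_meas.
  - exact: index_enum_uniq.
  - by move=> i j _ _ [z [bi bj]]; exact: bin_uniq bi bj.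
  - by rewrite bin_bigU.
  - by move=> z _; rewrite lee_fin; case/andP: (lM z).
have I2 : (\int[Q]_(z in setT) (l z)%:E <=
    (\sum_m (vb m + M / n%:R) * fine (Q (bin m)))%:E)%E.
  rewrite I1 -sumEFin; apply: lee_sum => m _.
  apply: (@le_trans _ _ (\int[Q]_(z in bin m) (cst (vb m + M / n%:R)%:E) z)%E).
    apply: ge0_le_integral.
    - exact: bin_meas.
    - by move=> z _; rewrite lee_fin; case/andP: (lM z).
    - exact: measurable_funS mlE.
    - exact: measurable_cst.
    - by move=> z /andP[_ h]; rewrite lee_fin /= ltW.
  rewrite integral_cst; last exact: bin_meas.
  rewrite (EFinM (vb m + M / n%:R)) fineK // ge0_fin_numE ?measure_ge0 //.
  by apply: (le_lt_trans (probability_le1 Q (bin_meas m))); rewrite ltry.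
have I0 : (0 <= \int[Q]_(z in setT) (l z)%:E)%E.
  by apply: integral_ge0 => z _; rewrite lee_fin; case/andP: (lM z).
have : Rintegral Q setT l <= \sum_m (vb m + M / n%:R) * fine (Q (bin m)).
  rewrite /Rintegral -lee_fin fineK // ge0_fin_numE //.
  by apply: (le_lt_trans I2); rewrite ltry.
move=> H; apply: (le_trans H).
under eq_bigr do rewrite mulrDl.
rewrite big_split /= -mulr_sumr bin_sum1 mulr1 lerD2r le_eqVlt; apply/orP; left.
by apply/eqP; apply: eq_bigr => m _; rewrite mulrC.
Qed.

Lemma bin_factor (c : R) : 0 <= c ->
  \sum_m expR (c * (Rintegral Q setT l - vb m)) * fine (Q (bin m)) <=
  expR (c * (M / n%:R) + c ^+ 2 * M ^+ 2 / 8).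
Proof.
move=> c0.
set mu0 := Rintegral Q setT l.
set nu := \sum_m fine (Q (bin m)) * vb m.
have H1 : mu0 - nu <= M / n%:R by have := bin_int; rewrite -/mu0 -/nu; lra.
have hf := @hoeff_fin R _ (fun m => fine (Q (bin m))) vb M c M0 c0
  (fun m => fine_ge0 (measure_ge0 _ _)) bin_sum1 vb_range.
have -> : \sum_m expR (c * (mu0 - vb m)) * fine (Q (bin m)) =
    expR (c * (mu0 - nu)) * \sum_m fine (Q (bin m)) * expR (c * (nu - vb m)).
  rewrite mulr_sumr; apply: eq_bigr => m _.
  have -> : c * (mu0 - vb m) = c * (mu0 - nu) + c * (nu - vb m) by ring.
  rewrite expRD; ring.
rewrite expRD; apply: ler_pM; first exact/ltW/expR_gt0.
- by apply: sumr_ge0 => m _; apply: mulr_ge0; [exact: fine_ge0 (measure_ge0 _ _)| exact/ltW/expR_gt0].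
- by rewrite ler_expR ler_wpM2l.
- exact: hf.
Qed.
End Bins.
Section Core.
Context {R : realType} {d : measure_display} {Omega : measurableType d} (P : probability Omega R).

Lemma PfinE (A : set Omega) : measurable A -> P A = (fine (P A))%:E.
Proof.
move=> mA; rewrite fineK // ge0_fin_numE ?measure_ge0 //.
by apply: (le_lt_trans (probability_le1 P mA)); rewrite ltry.
Qed.

Lemma fineP_ge0 (A : set Omega) : 0 <= fine (P A).
Proof. exact/fine_ge0/measure_ge0. Qed.

Lemma sub_seq (I : eqType) (s : seq I) (F : I -> set Omega) (A : set Omega) :
  (forall i, measurable (F i)) -> measurable A ->
  A `<=` [set om | exists i, i \in s /\ F i om] ->
  (P A <= \sum_(i <- s) P (F i))%E.
Proof.
move=> mF; elim: s A => [|a s IH] A mA sA.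
  rewrite big_nil; have -> : A = set0.
    by apply/seteqP; split => // x /sA [i []].
  by rewrite measure0.
rewrite big_cons.
apply: (@le_trans _ _ (P (F a `|` (A `\` F a)))).
  apply: le_measure; rewrite ?inE //; first exact: measurableU (mF a) (measurableD mA (mF a)).
  move=> x Ax; have [Fx|nFx] := pselect (F a x); [by left | by right].
apply: (le_trans (measureU2 P (mF a) (measurableD mA (mF a)))).
apply: leeD => //; apply: IH; first exact: measurableD.
move=> x [/sA [i [ias Fix]] nFx]; exists i; split => //.
move: ias; rewrite inE => /orP[/eqP eia|//].
by subst i.
Qed.

Variables (J : finType) (n : nat) (B : J -> 'I_n -> set Omega) (a : J -> 'I_n -> R)
  (E : set Omega) (eps lam : R).
Hypotheses (mB : forall j m, measurable (B j m)) (mE : measurable E)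
  (indep : forall f : {ffun J -> 'I_n},
     fine (P [set om | forall j, B j (f j) om]) = \prod_j fine (P (B j (f j))))
  (cover : forall om j, exists m, B j m om)
  (Eb : forall om (f : {ffun J -> 'I_n}), E om -> (forall j, B j (f j) om) ->
     eps < \sum_j a j (f j))
  (lam0 : 0 <= lam).

Lemma core : fine (P E) <=
  expR (- (lam * eps)) * \prod_j \sum_m expR (lam * a j m) * fine (P (B j m)).
Proof.
pose cell (f : {ffun J -> 'I_n}) := [set om | forall j, B j (f j) om].
have mcell f : measurable (cell f).
  have -> : cell f = \bigcap_(j in [set: J]) B j (f j).
    by apply/seteqP; split => om H j //; apply: H.
  by apply: fin_bigcap_measurable => //; exact: finite_finset.
pose s (f : {ffun J -> 'I_n}) := \sum_j a j (f j).
pose G (f : {ffun J -> 'I_n}) := if (eps < s f)%R then cell f else set0.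
have mG f : measurable (G f) by rewrite /G; case: ifP.
have EG : (P E <= \sum_(f <- index_enum {ffun J -> 'I_n}) P (G f))%E.
  apply: sub_seq => // om Eom.
  pose f := [ffun j => proj1_sig (cid (cover om j))].
  have cf : cell f om by move=> j; rewrite /f ffunE; exact: (proj2_sig (cid (cover om j))).
  exists f; split; first by rewrite mem_index_enum.
  by rewrite /G (@Eb om f Eom cf).
have EG' : fine (P E) <= \sum_f fine (P (G f)).
  move: EG; rewrite (@PfinE E mE).
  under eq_bigr do rewrite (@PfinE _ (mG _)).
  by rewrite sumEFin lee_fin.
apply: (le_trans EG').
apply: (@le_trans _ _ (\sum_f expR (lam * (s f - eps)) * \prod_j fine (P (B j (f j))))).
  apply: ler_sum => f _; rewrite -indep /G.
  case: ifP => sf.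
    rewrite -[X in X <= _]mul1r; apply: ler_wpM2r; first exact: fineP_ge0.
    rewrite -expR0 ler_expR; apply: mulr_ge0 => //; rewrite subr_ge0; exact: ltW.
  by rewrite measure0 /= mulr_ge0 // ?fineP_ge0 // ltW // expR_gt0.
rewrite bigA_distr_bigA mulr_sumr le_eqVlt; apply/orP; left; apply/eqP; apply: eq_bigr => f _.
rewrite big_split /= -expR_sum -mulr_sumr /s mulrBr expRD; ring.
Qed.
End Core.
Section Rad.
Context {R : realType} {dX dY : measure_display}
  {X : measurableType dX} {Y : measurableType dY} {p : nat}.

Lemma rad_inner_ge0 (N : nat) (normw : 'rV[R]_p -> R) (loss : 'rV[R]_p -> X -> Y -> R)
  (M r : R) (s : 'I_N -> (X * Y)%type) (w0 : 'rV[R]_p) :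
  normw w0 <= r -> (forall w x y, 0 <= loss w x y <= M) ->
  0 <= rad_inner normw loss r s.
Proof.
move=> hw0 lM.
rewrite /rad_inner; apply: mulr_ge0; first by rewrite invr_ge0 exprn_ge0.
set val := fun (sg : {ffun 'I_N -> bool}) (w : 'rV[R]_p) =>
  N%:R^-1 * \sum_(i < N) (-1) ^+ sg i * loss w (s i).1 (s i).2.
have ub sg : has_ubound [set val sg w | w in [set w | normw w <= r]].
  exists (N%:R^-1 * \sum_(i < N) M) => _ [w _ <-].
  rewrite /val; apply: ler_wpM2l; first by rewrite invr_ge0.
  apply: ler_sum => i _; have /andP[l0 l1] := lM w (s i).1 (s i).2.
  by case: (sg i); rewrite ?expr1 ?expr0 ?mulN1r ?mul1r //; lra.
apply: (@le_trans _ _ (\sum_sg val sg w0)).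
  have neg_inj : injective (fun sg : {ffun 'I_N -> bool} => [ffun i => ~~ sg i]).
    move=> f g /ffunP H; apply/ffunP => i; have := H i; rewrite !ffunE.
    by case: (f i); case: (g i).
  have H : \sum_sg val sg w0 = - \sum_sg val sg w0.
    rewrite [in LHS](reindex_inj neg_inj) -sumrN; apply: eq_bigr => sg _.
    rewrite /val -mulrN -sumrN; congr (_ * _); apply: eq_bigr => i _.
    by rewrite ffunE; case: (sg i); rewrite ?expr1 ?expr0 /=; lra.
  lra.
apply: ler_sum => sg _; apply: (ub_le_sup (ub sg)); by exists w0.
Qed.
End Rad.
Section Aux.
Variable R : realType.
Lemma lim_aux (x A B : R) : 0 <= B ->
  (forall n : nat, (0 < n)%N -> x <= expR (A + B / n%:R)) -> x <= expR A.
Proof.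
move=> B0 H; rewrite leNgt; apply/negP => xA.
have x0 : 0 < x by apply: le_lt_trans xA; exact/ltW/expR_gt0.
set e := ln x - A.
have e0 : 0 < e by rewrite /e subr_gt0 -ltr_expR lnK // posrE.
set n := (Num.truncn (B / e)).+1.
have n0 : (0 < n)%N by [].
have Bn : B / n%:R < e.
  rewrite ltr_pdivrMr ?ltr0n // mulrC -ltr_pdivrMr //.
  exact: Num.Theory.truncnS_gt.
have := H n n0.
have : expR (A + B / n%:R) < x.
  rewrite -[X in _ < X]lnK ?posrE // ltr_expR; rewrite /e in Bn; lra.
move=> h1 h2; have := lt_le_trans h1 h2; by rewrite ltxx.
Qed.

Lemma alg_aux (K N M t eps n : R) : 1 <= K -> 1 <= N -> 0 < M -> 0 < t -> t <= eps -> 0 < n ->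
  - (4 * K * N * t / M ^+ 2 * eps) +
    (K * N) * (4 * K * N * t / M ^+ 2 / (K * N) * (M / n) +
      (4 * K * N * t / M ^+ 2 / (K * N)) ^+ 2 * M ^+ 2 / 8) <=
  - (2 * K / M ^+ 2) * t ^+ 2 + 4 * K * N * t / M ^+ 2 * M / n.
Proof.
move=> K1 N1 M0 t0 te n0.
have KN : K * N != 0 by rewrite mulf_neq0 // gt_eqF //; lra.
have Mn : M != 0 by rewrite gt_eqF.
have nn : n != 0 by rewrite gt_eqF.
have Kn : K != 0 by rewrite gt_eqF //; lra.
have Nn : N != 0 by rewrite gt_eqF //; lra.
have u0 : 0 < (M ^+ 2)^-1 by rewrite invr_gt0 exprn_gt0.
have -> : - (4 * K * N * t / M ^+ 2 * eps) +
    (K * N) * (4 * K * N * t / M ^+ 2 / (K * N) * (M / n) +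
      (4 * K * N * t / M ^+ 2 / (K * N)) ^+ 2 * M ^+ 2 / 8) =
    (M ^+ 2)^-1 * (- (4 * K * N * t * eps) + 2 * K * N * t ^+ 2) + 4 * K * N * t / M ^+ 2 * M / n.
  by field; rewrite ?KN ?Mn ?nn ?Kn ?Nn.
have -> : - (2 * K / M ^+ 2) * t ^+ 2 = (M ^+ 2)^-1 * (- (2 * K * t ^+ 2)) by field.
rewrite lerD2r; apply: ler_wpM2l; first exact: ltW.
have h1 : 0 <= K * N * t * (eps - t) by rewrite !mulr_ge0 ?subr_ge0 //; lra.
have h2 : 0 <= K * t ^+ 2 * (N - 1) by rewrite !mulr_ge0 ?subr_ge0 ?sqr_ge0 //; lra.
nra.
Qed.
End Aux.

Theorem mainTheorem1 (R : realType) (d dX dY : measure_display)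
  (Omega : measurableType d) (X : measurableType dX) (Y : measurableType dY)
  (P : probability Omega R) (p K N : nat)
  (* the model p_w(y|x) (density w.r.t. nu) and input law p(x) defining ||.||_FR *)
  (px : probability X R) (nu : {measure set Y -> \bar R})
  (dens : 'rV[R]_p -> X -> Y -> R)
  (tau : 'I_K -> R) (wt : R -> 'rV[R]_p)
  (dist : R -> probability (X * Y)%type R)
  (Z : 'I_K -> 'I_N -> Omega -> (X * Y)%type)
  (loss : 'rV[R]_p -> X -> Y -> R) (M eps : R) :
  (0 < K)%N -> (0 < N)%N ->
  (* the model is a conditional density *)
  (forall w x y, 0 < dens w x y) ->
  (forall w x, (\int[nu]_y (dens w x y)%:E = 1)%E) ->
  (* 0 <= tau_1 < ... < tau_K <= 1 *)
  (forall k : 'I_K, 0 <= tau k <= 1) ->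
  (forall k l : 'I_K, (k < l)%N -> tau k < tau l) ->
  (* samples: Z k i is the i-th pair of the sample for task k *)
  (forall k i, measurable_fun setT (Z k i)) ->
  (forall k i A, measurable A -> P (Z k i @^-1` A) = dist (tau k) A) ->
  (forall A : 'I_K -> 'I_N -> set (X * Y)%type,
     (forall k i, measurable (A k i)) ->
     fine (P [set om | forall k i, A k i (Z k i om)]) =
     \prod_(k < K) \prod_(i < N) fine (P (Z k i @^-1` A k i))) ->
  (* bounded measurable loss *)
  0 < M ->
  (forall w x y, 0 <= loss w x y <= M) ->
  (forall w, measurable_fun setT (fun z : X * Y => loss w z.1 z.2)) ->
  (* measurability of the supremum in the Rademacher complexity *)
  (forall (k : 'I_K) r, 0 <= r ->
     measurable_fun setT
       (fun om => rad_inner (FRnorm px nu dens) loss r (fun i => Z k i om))) ->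
  let Rbound := 2 / K%:R * \sum_(k < K)
      rademacher P (fun om i => Z k i om) (FRnorm px nu dens) loss
        (FRnorm px nu dens (wt (tau k))) in
  Rbound < eps ->
  (P [set om | (K%:R^-1 * \sum_(k < K)
        (Rintegral (dist (tau k)) setT
           (fun z => loss (wt (tau k)) z.1 z.2)
         - N%:R^-1 * \sum_(i < N) loss (wt (tau k)) (Z k i om).1 (Z k i om).2)
        > eps)%R] <=
   (expR (- (2 * K%:R / M ^+ 2) * (eps - Rbound) ^+ 2))%:E)%E.
Proof.
move=> K0 N0 dens0 densint tau01 tauinc mZ lawZ indep M0 lM mloss mrad Rbound Reps.
have R0 : 0 <= Rbound.
  rewrite /Rbound; apply: mulr_ge0; first by rewrite divr_ge0 // ler0n.
  apply: sumr_ge0 => k _; rewrite /rademacher; apply: Rintegral_ge0 => om _.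
  exact: (@rad_inner_ge0 _ _ _ _ _ _ _ _ _ M _ _ (wt (tau k)) (lexx _) lM).
set t := eps - Rbound.
have t0 : 0 < t by rewrite /t subr_gt0.
have te : t <= eps by rewrite /t; lra.
have K1 : 1 <= K%:R :> R by rewrite ler1n.
have N1 : 1 <= N%:R :> R by rewrite ler1n.
pose lk := fun (k : 'I_K) (z : (X * Y)%type) => loss (wt (tau k)) z.1 z.2.
pose mu := fun k : 'I_K => Rintegral (dist (tau k)) setT (lk k).
pose f := fun om => K%:R^-1 * \sum_(k < K) (mu k
    - N%:R^-1 * \sum_(i < N) lk k (Z k i om)).
change (P [set om | (f om > eps)%R] <=
  (expR (- (2 * K%:R / M ^+ 2) * t ^+ 2))%:E)%E.
set Ev := [set om | (f om > eps)%R].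
have mf : measurable_fun setT f.
  rewrite /f; apply: measurable_funM; first exact: measurable_cst.
  apply: measurable_sum => k; apply: measurable_funB; first exact: measurable_cst.
  apply: measurable_funM; first exact: measurable_cst.
  apply: measurable_sum => i; exact: (measurableT_comp (mloss (wt (tau k))) (mZ k i)).
have mEv : measurable Ev.
  have -> : Ev = setT `&` f @^-1` [set` `]eps, +oo[%R].
    by apply/seteqP; split => om /=; rewrite in_itv /= andbT; [move=> H; split | move=> [_ H]].
  exact: mf (measurable_itv _).
set A := - (2 * K%:R / M ^+ 2) * t ^+ 2.
set lam := 4 * K%:R * N%:R * t / M ^+ 2.
have lam0 : 0 <= lam.
  rewrite /lam; apply/ltW/divr_gt0; last exact: exprn_gt0.
  rewrite !mulr_gt0 //; lra.
have KN : K%:R * N%:R != 0 :> R by rewrite mulf_neq0 // gt_eqF //; lra.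
have bound : forall n : nat, (0 < n)%N -> fine (P Ev) <= expR (A + lam * M / n%:R).
  move=> n n0.
  pose c := lam / (K%:R * N%:R).
  have c0 : 0 <= c by rewrite /c divr_ge0 // mulr_ge0 // ler0n.
  pose Bj := fun (j : 'I_K * 'I_N) (m : 'I_n.+1) => Z j.1 j.2 @^-1` bin (lk j.1) M n m.
  pose aj := fun (j : 'I_K * 'I_N) (m : 'I_n.+1) => (mu j.1 - vb M n m) / (K%:R * N%:R).
  have mlk k : measurable_fun setT (lk k) := mloss (wt (tau k)).
  have lkM k z : 0 <= lk k z <= M := lM _ z.1 z.2.
  have mB j m : measurable (Bj j m).
    rewrite /Bj -[X in measurable X]setTI.
    by apply: mZ => //; exact: bin_meas.
  have indB : forall g : {ffun 'I_K * 'I_N -> 'I_n.+1},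
      fine (P [set om | forall j, Bj j (g j) om]) = \prod_j fine (P (Bj j (g j))).
    move=> g.
    have := indep (fun k i => bin (lk k) M n (g (k, i))) (fun k i => bin_meas _ _ _ (mlk k) _).
    have -> : [set om | forall k i, bin (lk k) M n (g (k, i)) (Z k i om)] =
        [set om | forall j, Bj j (g j) om].
      by apply/seteqP; split => om H; [move=> [k i]; exact: H | move=> k i; exact: (H (k, i))].
    by move=> ->; rewrite pair_bigA /=; apply: eq_bigr => -[k i] _.
  have covB om j : exists m, Bj j m om := bin_cover _ _ _ M0 n0 (lkM j.1) (Z j.1 j.2 om).
  have EbB om (g : {ffun 'I_K * 'I_N -> 'I_n.+1}) :
      Ev om -> (forall j, Bj j (g j) om) -> eps < \sum_j aj j (g j).
    move=> Eom Hc; apply: (lt_le_trans Eom).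
    have -> : \sum_j aj j (g j) = \sum_(k < K) \sum_(i < N) aj (k, i) (g (k, i)).
      by rewrite pair_bigA; apply: eq_bigr => -[k i] _.
    rewrite /f /aj /= mulr_sumr; apply: ler_sum => k _.
    have -> : \sum_(i < N) (mu k - vb M n (g (k, i))) / (K%:R * N%:R) =
        K%:R^-1 * (mu k - N%:R^-1 * \sum_(i < N) vb M n (g (k, i))).
      rewrite -mulr_suml sumrB sumr_const card_ord -mulr_natr.
      by field; move: KN; rewrite mulf_eq0 negb_or => /andP[-> ->].
    apply: ler_wpM2l; first by rewrite invr_ge0 ler0n.
    rewrite lerD2l lerN2; apply: ler_wpM2l; first by rewrite invr_ge0 ler0n.
    by apply: ler_sum => i _; have := Hc (k, i); rewrite /Bj /bin /= => /andP[h _].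
  have Hc := @core _ _ _ P _ n.+1 Bj aj Ev eps lam mB mEv indB covB EbB lam0.
  apply: (le_trans Hc).
  have fac j : \sum_m expR (lam * aj j m) * fine (P (Bj j m)) <=
      expR (c * (M / n%:R) + c ^+ 2 * M ^+ 2 / 8).
    have -> : \sum_m expR (lam * aj j m) * fine (P (Bj j m)) =
        \sum_m expR (c * (mu j.1 - vb M n m)) * fine (dist (tau j.1) (bin (lk j.1) M n m)).
      apply: eq_bigr => m _; rewrite /Bj lawZ; last exact: bin_meas.
      congr (expR _ * _); rewrite /aj /c.
      by field; move: KN; rewrite mulf_eq0 negb_or => /andP[-> ->].
    exact: (bin_factor (dist (tau j.1)) (lk j.1) M n M0 n0 (mlk _) (lkM _) c c0).
  apply: (@le_trans _ _ (expR (- (lam * eps)) *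
      \prod_(j : 'I_K * 'I_N) expR (c * (M / n%:R) + c ^+ 2 * M ^+ 2 / 8))).
    apply: ler_wpM2l; first exact/ltW/expR_gt0.
    apply: ler_prod => j _; apply/andP; split; last exact: fac.
    apply: sumr_ge0 => m _; apply: mulr_ge0; [exact/ltW/expR_gt0 | exact/fine_ge0/measure_ge0].
  rewrite -expR_sum -expRD ler_expR sumr_const card_prod !card_ord.
  rewrite -(mulr_natl (c * (M / n%:R) + c ^+ 2 * M ^+ 2 / 8) (K * N)) natrM.
  by apply: alg_aux => //; rewrite ltr0n.
have H := @lim_aux R _ _ _ (mulr_ge0 lam0 (ltW M0)) bound.
by rewrite (@PfinE _ _ _ P Ev mEv) lee_fin.
Qed.
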